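(* Let $G=\bigoplus_{i=1}^k\mathbb Z/p^{r_i}\mathbb Z$ and $a\in\mathcal F(G,K)$. Then $\mathrm{CharPoly}_{a,G}=(x-|a|)^{|G|}$. In particular, there exists a nonzero $a$-harmonic function on $G$ if and only if the constant function $1$ on $G$ is $a$-harmonic, if and only if $|a|=0$.
   Context: $K$ is a field of characteristic $p$. $\mathcal F(G,K)$ is the space of functions $G\to K$, $(f*a)(g)=\sum_hf(h)a(g-h)$, $\Delta_af=f*a$; $\mathrm{CharPoly}_{a,G}$ is the monic characteristic polynomial of $\Delta_a$ on $\mathcal F(G,K)$; $f$ is $a$-harmonic if $f*a=0$; $|a|=\sum_{u\in G}a(u)$. *)

(* Defs.v *)
From HB Require Import structures.
From mathcomp Require Import all_boot all_order all_algebra.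
Set Implicit Arguments. Unset Strict Implicit. Unset Printing Implicit Defensive.
Import GRing.Theory.
Local Open Scope ring_scope.

Section Generic.
Variables (G : finZmodType) (K : fieldType).

Definition conv (f a : {ffun G -> K}) : {ffun G -> K} :=
  [ffun g => \sum_(h : G) f h * a (g - h)].

Definition Delta (a : {ffun G -> K}) (f : {ffun G -> K}) := conv f a.

Definition harmonic (a f : {ffun G -> K}) : Prop := conv f a = 0.

Definition mass (a : {ffun G -> K}) : K := \sum_(u : G) a u.

Definition delta_fun (g : G) : {ffun G -> K} := [ffun x => (x == g)%:R].

Definition Delta_mx (a : {ffun G -> K}) : 'M[K]_#|G| :=
  \matrix_(i, j) Delta a (delta_fun (enum_val j)) (enum_val i).

Definition CharPoly (a : {ffun G -> K}) : {poly K} := char_poly (Delta_mx a).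

End Generic.

(* the i-th summand is 'I_((p^r_i).-1.+1), i.e. Z/p^{r_i}Z since p^{r_i} > 0 *)
Definition pgrp (p k : nat) (r : 'I_k -> nat) : Type :=
  {dffun forall i : 'I_k, 'I_((p ^ r i).-1.+1)}.

Section PGroup.
Variables (p k : nat) (r : 'I_k -> nat).
Local Notation T := (pgrp p r).

HB.instance Definition _ := Finite.on T.

Definition pg_zero : T := [ffun i => 0].
Definition pg_opp (x : T) : T := [ffun i => - x i].
Definition pg_add (x y : T) : T := [ffun i => x i + y i].

Lemma pg_addA : associative pg_add.
Proof. by move=> x y z; apply/ffunP=> i; rewrite !ffunE addrA. Qed.
Lemma pg_addC : commutative pg_add.
Proof. by move=> x y; apply/ffunP=> i; rewrite !ffunE addrC. Qed.
Lemma pg_add0 : left_id pg_zero pg_add.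
Proof. by move=> x; apply/ffunP=> i; rewrite !ffunE add0r. Qed.
Lemma pg_addN : left_inverse pg_zero pg_opp pg_add.
Proof. by move=> x; apply/ffunP=> i; rewrite !ffunE addNr. Qed.

HB.instance Definition _ :=
  GRing.isZmodule.Build T pg_addA pg_addC pg_add0 pg_addN.
End PGroup.

(* Main.v *)
Require Import Defs.
From HB Require Import structures.
From mathcomp Require Import all_boot all_order all_algebra.
From mathcomp Require fingroup cyclic.
Import GRing.Theory.
Local Open Scope ring_scope.
Set Implicit Arguments. Unset Strict Implicit. Unset Printing Implicit Defensive.

Section Frob.
Variables (R : pzRingType) (p : nat).
Hypothesis pr : prime p.
Hypothesis hp : forall x : R, x *+ p = 0.

Lemma frobD (x y : R) : GRing.comm x y -> (x + y) ^+ p = x ^+ p + y ^+ p.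
Proof.
move=> cxy.
have defp := prednK (prime_gt0 pr).
rewrite exprDn_comm // big_ord_recr subnn -defp big_ord_recl /= defp.
rewrite subn0 mulr1 mul1r bin0 binn big1 ?addr0 // => i _.
have : (p %| 'C(p, (bump 0 i)))%N.
  apply: prime_dvd_bin => //=; rewrite /bump /= add1n.
  by rewrite -{2}defp ltnS (valP i).
by case/dvdnP => m ->; rewrite mulnC mulrnA hp mul0rn.
Qed.

Lemma frob_sum (I : Type) (s : seq I) (F : I -> R) :
  (forall i j, GRing.comm (F i) (F j)) ->
  (\sum_(i <- s) F i) ^+ p = \sum_(i <- s) F i ^+ p.
Proof.
move=> cF; elim: s => [|i s IH].
  by rewrite !big_nil expr0n; case: p pr.
rewrite !big_cons frobD ?IH //.
by apply: commr_sum => j _; apply: cF.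
Qed.

Lemma frob_sumX (I : Type) (s : seq I) k (F : I -> R) :
  (forall i j, GRing.comm (F i) (F j)) ->
  (\sum_(i <- s) F i) ^+ (p ^ k) = \sum_(i <- s) F i ^+ (p ^ k).
Proof.
elim: k F => [|k IH] F cF; first by rewrite expn0 expr1; apply: eq_bigr => i; rewrite expr1.
rewrite expnS exprM frob_sum // IH.
  by apply: eq_bigr => i _; rewrite -exprM.
by move=> i j; apply: commrX; apply: commr_sym; apply: commrX; apply: commr_sym.
Qed.

Lemma frobDX (x y : R) k : GRing.comm x y -> (x + y) ^+ (p ^ k) = x ^+ (p ^ k) + y ^+ (p ^ k).
Proof.
move=> cxy.
have := @frob_sumX bool [:: true; false] k (fun b => if b then x else y).
rewrite !big_cons !big_nil !addr0; apply; do 2 case => //=;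
  (exact: commr_refl || exact: commr_sym || exact: cxy).
Qed.
End Frob.

Lemma map_mxX (K : fieldType) n (A : 'M[K]_n) m :
  map_mx (@polyC K) (A ^+ m) = (map_mx (@polyC K) A) ^+ m.
Proof.
elim: m => [|m IH]; first by rewrite !expr0 map_mx1.
by rewrite !exprS -!mulmxE map_mxM IH.
Qed.

Lemma char_poly_nil (K : fieldType) n (A : 'M[K]_n) (c : K) m :
  (A - c%:M) ^+ m = 0 -> char_poly A = ('X - c%:P) ^+ n.
Proof.
move=> Hn.
set Y := 'X - c%:P.
set B := map_mx (@polyC K) (A - c%:M).
have HB : B ^+ m = 0 by rewrite /B -map_mxX Hn map_mx0.
have HM : char_poly_mx A = Y%:M - B.
  rewrite /char_poly_mx /B /Y map_mxB map_scalar_mx raddfB.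
  by rewrite opprB addrA subrK.
have cYB : GRing.comm (Y%:M) B by rewrite /GRing.comm -!mulmxE scalar_mxC.
have := subrXX_comm m cYB.
rewrite HB subr0 => /(congr1 determinant).
have -> : (Y%:M) ^+ m = (Y ^+ m)%:M :> 'M_n.
  elim: m {Hn HB} => [|m IH]; first by rewrite !expr0.
  by rewrite !exprS IH -mulmxE -scalar_mxM.
rewrite det_scalar -mulmxE det_mulmx -HM -/(char_poly A) -exprM => Hdet.
have : char_poly A %| Y ^+ (m * n) by rewrite Hdet dvdp_mulIl.
case/dvdp_exp_XsubCP => k _.
rewrite eqp_monic ?char_poly_monic ?monic_exp ?monicXsubC // => /eqP Hk.
have := size_char_poly A; rewrite Hk size_exp_XsubC => -[->].
by [].
Qed.

Section Grp.
Variables (G : finZmodType) (K : fieldType).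
Local Notation n := #|G|.
Local Notation e := (@enum_val G (pred_of_simpl predT)).

Lemma sum_enumG (F : G -> K) : \sum_(i < n) F (e i) = \sum_x F x.
Proof.
rewrite [RHS](reindex e) //; exists enum_rank => x _; [exact: enum_valK | exact: enum_rankK].
Qed.

Lemma Delta_mxE (a : {ffun G -> K}) i j : Delta_mx a i j = a (e i - e j).
Proof.
rewrite mxE /Delta /conv ffunE (bigD1 (e j)) //= ffunE eqxx mul1r big1 ?addr0 //.
by move=> h /negbTE hn; rewrite ffunE hn mul0r.
Qed.

Definition Pm (g : G) : 'M[K]_n := \matrix_(i, j) ((e i - e j == g)%:R).

Lemma Delta_sum a : Delta_mx a = \sum_g a g *: Pm g.
Proof.
apply/matrixP=> i j; rewrite summxE Delta_mxE (bigD1 (e i - e j)) //= !mxE eqxx mulr1.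
rewrite big1 ?addr0 // => g ng; by rewrite !mxE eq_sym (negbTE ng) mulr0.
Qed.

Lemma PmM g h : Pm g * Pm h = Pm (g + h).
Proof.
apply/matrixP=> i j; rewrite -mulmxE !mxE.
rewrite (eq_bigr (fun k => (e i - e k == g)%:R * (e k - e j == h)%:R)); last first.
  by move=> k _; rewrite !mxE.
rewrite (sum_enumG (fun x => (e i - x == g)%:R * (x - e j == h)%:R)).
rewrite (bigD1 (e i - g)) //= big1 ?addr0.
  by rewrite opprB addrC subrK eqxx mul1r addrAC subr_eq [h + g]addrC.
by move=> x hx; rewrite subr_eq addrC -subr_eq eq_sym (negbTE hx) mul0r.
Qed.

Lemma Pm0 : Pm 0 = 1.
Proof.
apply/matrixP=> i j; rewrite !mxE subr_eq0 (inj_eq enum_val_inj).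
by [].
Qed.

Lemma PmX g m : Pm g ^+ m = Pm (g *+ m).
Proof.
elim: m => [|m IH]; first by rewrite expr0 mulr0n Pm0.
by rewrite exprS IH PmM mulrS.
Qed.

End Grp.

Section Nil.
Variables (G : finZmodType) (K : fieldType) (p : nat).
Hypothesis hp : p \in [pchar K].
Variable k : nat.
Hypothesis Hexp : forall x : G, x *+ (p ^ k) = 0.
Local Notation n := #|G|.

Lemma mx_pchar (x : 'M[K]_n) : x *+ p = 0.
Proof. by apply/matrixP => i j; rewrite mulmxnE (mulrn_pchar hp) mxE. Qed.

Lemma K_pchar (x : K) : x *+ p = 0.
Proof. exact: (mulrn_pchar hp). Qed.

Lemma mx_exprZ (c : K) (A : 'M[K]_n) m : (c *: A) ^+ m = c ^+ m *: A ^+ m.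
Proof.
elim: m => [|m IH]; first by rewrite !expr0 scale1r.
by rewrite !exprS IH -!mulmxE -scalemxAl -scalemxAr scalerA.
Qed.

Lemma Delta_nil (a : {ffun G -> K}) :
  (Delta_mx a - (mass a)%:M) ^+ (p ^ k) = 0.
Proof.
have pr := pcharf_prime hp.
have HD : Delta_mx a ^+ (p ^ k) = ((mass a) ^+ (p ^ k))%:M.
  rewrite Delta_sum (frob_sumX pr mx_pchar).
    under eq_bigr => g _ do rewrite mx_exprZ PmX Hexp Pm0.
    rewrite -scaler_suml /mass (frob_sumX pr K_pchar) ?scalemx1 //.
    by move=> i j; exact: mulrC.
  move=> g h; rewrite /GRing.comm -!mulmxE -!scalemxAl -!scalemxAr !mulmxE !PmM addrC.
  by rewrite !scalerA mulrC.
have cN : GRing.comm (Delta_mx a - (mass a)%:M) ((mass a)%:M).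
  by rewrite /GRing.comm -!mulmxE scalar_mxC.
have := frobDX pr mx_pchar k cN.
rewrite subrK HD.
have -> : ((mass a)%:M) ^+ (p ^ k) = ((mass a) ^+ (p ^ k))%:M :> 'M_n.
  elim: (p ^ k)%N => [|m IH]; first by rewrite !expr0.
  by rewrite !exprS IH -mulmxE -scalar_mxM.
by move=> H; apply: (@addIr _ ((mass a ^+ (p ^ k))%:M)); rewrite add0r -H.
Qed.
End Nil.

Lemma foldr_pow (I : Type) (s : seq I) (p : nat) (f : I -> nat) :
  exists e, foldr muln 1%N [seq (p ^ f x)%N | x <- s] = (p ^ e)%N.
Proof.
elim: s => [|x s [e IH]]; first by exists 0%N.
by exists (f x + e)%N; rewrite /= IH expnD.
Qed.

Lemma zmod_card (G : finZmodType) (x : G) : x *+ #|G| = 0.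
Proof.
have := @cyclic.expg_cardG _ (fingroup.setT_group (FinRing.Zmodule_to_finGroup G)) x (in_setT x).
by rewrite cardsT.
Qed.

Lemma pgrp_exp (p k : nat) (r : 'I_k -> nat) : prime p ->
  exists e, forall x : pgrp p r, x *+ (p ^ e) = 0.
Proof.
move=> pr.
have [e He] : exists e, #|{: pgrp p r}| = (p ^ e)%N.
  have [e He] := foldr_pow (enum 'I_k) p r.
  exists e; rewrite -He /pgrp card_dep_ffun; congr foldr.
  by apply: eq_map => i; rewrite card_ord prednK // expn_gt0 prime_gt0.
exists e => x; rewrite -He.
exact: zmod_card.
Qed.

Section Final.
Variables (G : finZmodType) (K : fieldType).

Lemma conv1 (a : {ffun G -> K}) : conv [ffun=> 1] a = [ffun=> mass a].
Proof.
apply/ffunP => g; rewrite !ffunE /mass.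
have inj : injective (fun h : G => g - h) by apply: (can_inj (g := fun h => g - h)) => h; rewrite subKr.
rewrite (reindex_inj inj) /=; apply: eq_bigr => h _; by rewrite ffunE mul1r subKr.
Qed.

Lemma harm1 (a : {ffun G -> K}) : harmonic a [ffun=> 1] <-> mass a = 0.
Proof.
rewrite /harmonic conv1; split => [H|H].
  by have := congr1 (fun f : {ffun G -> K} => f 0) H; rewrite !ffunE.
by apply/ffunP => g; rewrite !ffunE.
Qed.

Lemma harm_det (a f : {ffun G -> K}) : f != 0 -> harmonic a f -> \det (Delta_mx a) = 0.
Proof.
move=> fn0 hf; apply/eqP; rewrite -det_tr; apply/det0P.
exists (\row_j f (enum_val j)).
  apply: contra fn0 => /eqP hv; apply/eqP/ffunP => x.
  have := congr1 (fun M : 'rV_ _ => M 0 (enum_rank x)) hv.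
  by rewrite !mxE enum_rankK ffunE.
apply/matrixP => i j; rewrite !mxE.
rewrite (eq_bigr (fun l => f (enum_val l) * a (enum_val j - enum_val l))); last first.
  by move=> l _; rewrite !mxE; congr (_ * _); have := Delta_mxE a j l; rewrite mxE.
rewrite (@sum_enumG G K (fun x : G => f x * a (enum_val j - x))).
by have := congr1 (fun F : {ffun G -> K} => F (enum_val j)) hf; rewrite /conv ffunE => ->; rewrite ffunE.
Qed.
End Final.

Unset Implicit Arguments.
Theorem corollary1p3 (K : fieldType) (p : nat) (hp : p \in [pchar K])
    (k : nat) (r : 'I_k -> nat) (a : {ffun pgrp p r -> K}) :
  CharPoly a = ('X - (mass a)%:P) ^+ #|{: pgrp p r}|
  /\ ((exists f : {ffun pgrp p r -> K}, f != 0 /\ harmonic a f)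
        <-> harmonic a [ffun=> 1])
  /\ (harmonic a [ffun=> 1] <-> mass a = 0).
Proof.
have [e He] := pgrp_exp r (pcharf_prime hp).
have HC : CharPoly a = ('X - (mass a)%:P) ^+ #|{: pgrp p r}|.
  exact: (char_poly_nil (Delta_nil hp He a)).
split => //; split; last exact: harm1.
split.
  case=> f [fn0 hf]; apply/harm1.
  have hd := harm_det fn0 hf.
  have := char_poly_det (Delta_mx a).
  rewrite -/(CharPoly a) hd mulr0 HC -horner_coef0 horner_exp hornerXsubC.
  by rewrite add0r => /eqP; rewrite expf_eq0 oppr_eq0 => /andP[_ /eqP].
move=> h1; exists [ffun=> 1]; split => //.
apply/eqP => /(congr1 (fun f : {ffun pgrp p r -> K} => f 0)); rewrite !ffunE => /eqP; by rewrite oner_eq0.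
Qed.
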